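(* Let $V$ be a finite ground set with $n=|V|$, let $f:2^V\to\mathbb{R}_{\ge 0}$ be monotone submodular, let $k\ge 1$ be an integer, and let $OPT=\max_{A\subseteq V,|A|\le k} f(A)$. Run the following randomized procedure (Algorithm 1) with threshold $\tau=\frac{OPT}{2k}$: (i) draw a random set $S\subseteq V$ containing each element independently with probability $p=4\sqrt{k/n}$, and independently partition $V$ at random into sets $V_1,\dots,V_m$ (one per machine); (ii) compute $G_0=\textsc{ThresholdGreedy}(S,\emptyset,\tau)$; (iii) for each $i=1,\dots,m$, set $R_i=\textsc{ThresholdFilter}(V_i,G_0,\tau)$ if $|G_0|<k$, and $R_i=\emptyset$ otherwise; (iv) output $G=\textsc{ThresholdGreedy}\big(\bigcup_{i=1}^m R_i,\,G_0,\,\tau\big)$. Then the approximation ratio of this algorithm is at least $1/2$; namely, for every outcome of the random choices, the output satisfies $f(G)\ge \frac12\, OPT$.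
   Context: A function $f:2^V\to\mathbb{R}_{\ge0}$ is submodular if $f(A\cup\{e\})-f(A)\ge f(B\cup\{e\})-f(B)$ for all $A\subseteq B\subseteq V$ and $e\notin B$, and monotone if $f(A\cup\{e\})-f(A)\ge 0$ for all $A$ and $e\notin A$. For $A\subseteq V$ and $e\in V$ write $f_A(e)=f(A\cup\{e\})-f(A)$ (the marginal of $e$ with respect to $A$). Fix a total order on $V$; all sets are scanned in this order. $\textsc{ThresholdGreedy}(T,G,\tau)$ (for $T\subseteq V$, $G\subseteq V$ with $|G|\le k$, $\tau>0$): start with $G'=G$; scan the elements $e\in T$ in the fixed order, and whenever $f_{G'}(e)\ge\tau$ and $|G'|<k$, replace $G'$ by $G'\cup\{e\}$; return $G'$. $\textsc{ThresholdFilter}(T,G,\tau)$ returns $\{e\in T: f_G(e)\ge\tau\}$. Here $m$ is the number of machines (the paper takes $m=\sqrt{n/k}$). *)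

(* Defs.v *)
From mathcomp Require Import all_boot all_order all_algebra.
Set Implicit Arguments. Unset Strict Implicit. Unset Printing Implicit Defensive.
Import Order.TTheory GRing.Theory Num.Theory.
Local Open Scope ring_scope.

Section Defs.
Variables (T : finType) (R : realFieldType).

Definition marg (f : {set T} -> R) (A : {set T}) (e : T) : R :=
  f (e |: A) - f A.

Definition nonneg_fun (f : {set T} -> R) : Prop := forall A : {set T}, 0 <= f A.

Definition monotone (f : {set T} -> R) : Prop :=
  forall (A : {set T}) (e : T), e \notin A -> 0 <= marg f A e.

Definition submodular (f : {set T} -> R) : Prop :=
  forall (A B : {set T}) (e : T), A \subset B -> e \notin B -> marg f B e <= marg f A e.

(* OPT = max_{|A| <= k} f(A)  (f is nonnegative, so 0 is a harmless seed) *)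
Definition OPT (f : {set T} -> R) (k : nat) : R :=
  \big[Num.max/0]_(A : {set T} | (#|A| <= k)%N) f A.

Definition thresholdGreedy (ord : seq T) (f : {set T} -> R) (k : nat)
  (Ts G : {set T}) (tau : R) : {set T} :=
  foldl (fun G' e =>
           if [&& e \in Ts, tau <= marg f G' e & (#|G'| < k)%N]
           then e |: G' else G') G ord.

Definition thresholdFilter (f : {set T} -> R) (Ts G : {set T}) (tau : R)
  : {set T} := [set e in Ts | tau <= marg f G e].

(* Algorithm 1 for a fixed outcome of the randomness: the sample S and the
   machine assignment [mach] (V_i = {e | mach e = i}). *)
Definition algorithm1 (ord : seq T) (f : {set T} -> R) (k m : nat)
  (S : {set T}) (mach : T -> 'I_m) : {set T} :=
  let tau := OPT f k / (2 * k%:R) in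
  let G0 := thresholdGreedy ord f k S set0 tau in
  let Rs := fun i : 'I_m =>
    if (#|G0| < k)%N then thresholdFilter f [set e | mach e == i] G0 tau
    else set0 in
  thresholdGreedy ord f k (\bigcup_(i < m) Rs i) G0 tau.
End Defs.

(* Main.v *)
Require Import Defs.
From mathcomp Require Import all_boot all_order all_algebra.
From mathcomp Require Import ring lra.
Import Order.TTheory GRing.Theory Num.Theory.
Local Open Scope ring_scope.

Section Aux.
Variables (T : finType) (R : realFieldType) (f : {set T} -> R).
Hypothesis mono : monotone f.
Hypothesis subm : submodular f.

Lemma marg_in (A : {set T}) e : e \in A -> marg f A e = 0.
Proof.
move=> eA; rewrite /marg.
have -> : e |: A = A by apply/setUidPr; rewrite sub1set.
by rewrite subrr.
Qed.

Lemma marg_ge0 (A : {set T}) e : 0 <= marg f A e.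
Proof. by case: (boolP (e \in A)) => eA; [rewrite marg_in | apply: mono]. Qed.

Lemma marg_anti (A B : {set T}) e : A \subset B -> marg f B e <= marg f A e.
Proof.
move=> AB; case: (boolP (e \in B)) => eB.
  by rewrite marg_in // marg_ge0.
exact: subm.
Qed.

Lemma mono_seq (A : {set T}) (s : seq T) : f A <= f (A :|: [set x in s]).
Proof.
elim: s => [|e s IH]; first by rewrite (_ : [set x in [::]] = set0) ?setU0 //; apply/setP=> x; rewrite !inE.
have -> : A :|: [set x in e :: s] = e |: (A :|: [set x in s]).
  by apply/setP => x; rewrite !inE; case: (x == e); rewrite ?orbT.
apply: (le_trans IH); have := marg_ge0 (A :|: [set x in s]) e.
by rewrite /marg subr_ge0.
Qed.

Lemma sum_seq (A : {set T}) (s : seq T) t : (forall e, marg f A e <= t) ->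
  f (A :|: [set x in s]) <= f A + t *+ size s.
Proof.
move=> Ht; elim: s => [|e s IH].
  by rewrite (_ : [set x in [::]] = set0) ?setU0 ?addr0 //; apply/setP=> x; rewrite !inE.
have -> : A :|: [set x in e :: s] = e |: (A :|: [set x in s]).
  by apply/setP => x; rewrite !inE; case: (x == e); rewrite ?orbT.
have h1 := @marg_anti A (A :|: [set x in s]) e (subsetUl A [set x in s]).
have h2 := Ht e.
move: IH h1 h2; rewrite /marg /= mulrS. set X := f (_ :|: _). set Y := f (e |: _).
move=> *; lra.
Qed.

Definition step (Ts : {set T}) (tau : R) k (G' : {set T}) e :=
  if [&& e \in Ts, tau <= marg f G' e & (#|G'| < k)%N] then e |: G' else G'.

Lemma greedy_sub ord k (Ts G : {set T}) (tau : R) : G \subset thresholdGreedy ord f k Ts G tau.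
Proof.
rewrite /thresholdGreedy; elim: ord G => [|e s IH] G //=.
apply: subset_trans (IH _); case: ifP => _ //; exact: subsetUr.
Qed.

Lemma greedy_val ord k (Ts G : {set T}) (tau : R) : 0 <= tau -> #|G|%:R * tau <= f G ->
  let r := thresholdGreedy ord f k Ts G tau in #|r|%:R * tau <= f r.
Proof.
move=> t0; rewrite /thresholdGreedy; elim: ord G => [|e s IH] G //= HG.
apply: IH; case: ifP => // /and3P [_ Hm _].
case: (boolP (e \in G)) => eG.
  by have -> : e |: G = G by apply/setUidPr; rewrite sub1set.
rewrite cardsU1 eG /= natrD mulrDl mul1r.
move: Hm; rewrite /marg => Hm; lra.
Qed.

Lemma greedy_rest ord k (Ts G : {set T}) (tau : R) : 0 < tau ->
  let r := thresholdGreedy ord f k Ts G tau in (#|r| < k)%N ->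
  forall x, x \in ord -> x \in Ts -> marg f r x < tau.
Proof.
move=> t0; rewrite /thresholdGreedy; elim: ord G => [|e s IH] G //= Hr x.
have sub := greedy_sub s k Ts (if [&& e \in Ts, tau <= marg f G e & (#|G| < k)%N] then e |: G else G) tau.
rewrite /thresholdGreedy in sub.
rewrite inE => /orP [/eqP -> | xs] xT; last exact: IH.
move: sub Hr; set r := foldl _ _ _ => sub Hr.
case: (boolP (e \in r)) => er; first by rewrite marg_in.
case: ifP sub => [_ sub | ].
  by exfalso; move/negP: er; apply; apply: (subsetP sub); rewrite setU11.
move=> /negbT; rewrite xT /= negb_and -ltNge -leqNgt => /orP [Hm | Hk] sub.
  apply: le_lt_trans Hm; exact: marg_anti.
exfalso; have := subset_leq_card sub; rewrite leqNgt.
by move/negP; apply; apply: leq_trans Hr Hk.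
Qed.

End Aux.
Arguments greedy_rest {T R f}.
Arguments marg_anti {T R f}.
Arguments sum_seq {T R f}.
Arguments mono_seq {T R f}.
Arguments greedy_val {T R f}.

Theorem lemma1 (T : finType) (R : realFieldType) (f : {set T} -> R) (k : nat)
  (ord : seq T) (m : nat) (S : {set T}) (mach : T -> 'I_m) :
  (1 <= k)%N ->
  nonneg_fun f -> monotone f -> submodular f ->
  uniq ord -> (forall x : T, x \in ord) ->
  (* support of the sample: when p = 4 sqrt(k/n) >= 1, i.e. 16k >= n, S = V *)
  ((#|T| <= 16 * k)%N -> S = setT) ->
  f (algorithm1 ord f k S mach) >= OPT f k / 2.
Proof.
move=> k1 nn mono subm _ allin _.
have [O [HO OPTle]] : exists O : {set T}, (#|O| <= k)%N /\ OPT f k <= f O.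
  rewrite /OPT; apply: (big_ind (fun x => exists O : {set T}, (#|O| <= k)%N /\ x <= f O)).
  - by exists set0; rewrite cards0.
  - move=> x y [O1 [h1 l1]] [O2 [h2 l2]]; rewrite maxEle; case: ifP => _.
      by exists O2. by exists O1.
  - by move=> A HA; exists A.
have OPT0 : 0 <= OPT f k.
  rewrite /OPT; elim/big_rec: _ => // A x _ hx; rewrite le_max hx orbT //.
rewrite /algorithm1; set tau := OPT f k / (2 * k%:R).
have kR : (k%:R : R) != 0 by rewrite pnatr_eq0 -lt0n.
have kpos : (0 : R) < k%:R by rewrite ltr0n.
have tauk : tau *+ k = OPT f k / 2.
  by rewrite -mulr_natr /tau; field; rewrite kR.
case: (ltrP 0 (OPT f k)) => [Opos | Ole]; last first.
  apply: le_trans (nn _); lra.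
have t0 : 0 < tau by rewrite /tau divr_gt0 // mulr_gt0.
set G0 := thresholdGreedy ord f k S set0 tau.
set G := thresholdGreedy _ _ _ _ G0 _.
have G0G : G0 \subset G := greedy_sub _ _ _ _ _ _ _ _.
have vG0 : #|G0|%:R * tau <= f G0.
  by apply: greedy_val; [exact: ltW | rewrite cards0 mul0r; exact: nn].
have vG : #|G|%:R * tau <= f G by apply: greedy_val => //; exact: ltW.
case: (leqP k #|G|) => Hk.
  apply: le_trans vG; rewrite -tauk -mulr_natl; apply: ler_wpM2r; [exact: ltW | by rewrite ler_nat].
have HG0 : (#|G0| < k)%N := leq_ltn_trans (subset_leq_card G0G) Hk.
have Hm : forall e, marg f G e <= tau.
  move=> e; apply: ltW.
  case: (boolP (e \in \bigcup_(i < m) (if (#|G0| < k)%N then thresholdFilter f [set e0 | mach e0 == i] G0 tau else set0))) => He.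
    exact: (greedy_rest mono subm _ _ _ _ _ t0 Hk e (allin e) He).
  apply: (le_lt_trans (marg_anti mono subm _ _ e G0G)).
  rewrite ltNge; apply/negP => Ht; move/negP: He; apply.
  apply/bigcupP; exists (mach e) => //; rewrite HG0 !inE eqxx /=; exact: Ht.
have := sum_seq mono subm G (enum O) tau Hm.
rewrite set_enum -cardE.
have := mono_seq mono O (enum G); rewrite set_enum setUC => h1 h2.
have h3 : tau *+ #|O| <= tau *+ k.
  rewrite -[tau *+ #|O|]mulr_natl -[tau *+ k]mulr_natl; apply: ler_wpM2r; [exact: ltW | by rewrite ler_nat].
rewrite tauk in h3.
have H : OPT f k <= f G + OPT f k / 2.
  apply: (le_trans OPTle); apply: (le_trans h1); apply: (le_trans h2); by rewrite lerD2l.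
suff : OPT f k / 2 <= f G by [].
move: H; generalize (OPT f k) (f G) => a b; lra.
Qed.
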